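(* Let $(Z,d)$ be a distance space, $X\cup Y=Z$ a cover, $A:=X\cap Y$, and $r\in[0,\infty)$. Assume there is $v\in A$ such that for all $x\in X\setminus A$ and $y\in Y\setminus A$ with $d(x,y)\le r$ one has $d(x,v)\le r$ and $d(y,v)\le r$. Fix such a $v$ and assume in addition that one of the following holds: (1) for every $x\in X\setminus A$ and $y\in Y\setminus A$ with $d(x,y)\le r$, every $w\in A$ with $d(w,x)\le r$ and $d(w,y)\le r$ satisfies $d(v,w)\le r$; (2) $\mathrm{diam}(A)\le r$; (3) $A=\{v\}$. Then the inclusion $\mathrm{VR}_r(X)\cup\mathrm{VR}_r(Y)\hookrightarrow\mathrm{VR}_r(Z)$ is a weak equivalence.
   Context: A distance on a set $Z$ is a function $d\colon Z\times Z\to[0,\infty]$ with $d(x,y)=d(y,x)$ and $d(x,x)=0$ (no triangle inequality assumed). $\mathrm{diam}(A)$ is the supremum of $d(a,b)$ over $a,b\in A$ (the maximum for finite $A$). For $B\subset Z$ and $r\in[0,\infty)$, $\mathrm{VR}_r(B)$ is the simplicial complex of all finite nonempty $\sigma\subset B$ with $d(x,y)\le r$ for all $x,y\in\sigma$. Homotopical notions refer to geometric realizations. *)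

(* Defs.v *)
From HB Require Import structures.
From mathcomp Require Import all_boot all_order all_algebra.
From mathcomp Require Import all_classical all_reals all_analysis.

Unset Printing Implicit Defensive.

Import Order.TTheory GRing.Theory Num.Theory.
Import numFieldNormedType.Exports.
Local Open Scope classical_set_scope.
Local Open Scope ring_scope.

Section VR.
Context {R : realType} {Z : choiceType}.

Definition diam (d : Z -> Z -> \bar R) (A : set Z) : \bar R :=
  ereal_sup [set d p.1 p.2 | p in A `*` A].

Definition VR (d : Z -> Z -> \bar R) (r : R) (B : set Z) : set (set Z) :=
  [set s | [/\ finite_set s, s !=set0, s `<=` B &
            forall x y, s x -> s y -> (d x y <= r%:E)%E]].
End VR.

Section Realization.
Context {R : realType}.

(** Geometric realization |K| of a simplicial complex K (set of simplices,
    each a finite subset of the vertex type V): barycentric-coordinate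
    functions t : V -> R, nonnegative, whose support is a simplex of K and
    whose coordinates sum to 1. *)
Definition supp {V : choiceType} (t : V -> R) : set V := [set v | t v != 0].

Definition realization {V : choiceType} (K : set (set V)) : set (V -> R) :=
  [set t | [/\ forall v, 0 <= t v, K (supp t) &
               \sum_(v \in supp t) t v = 1]].

Definition closed_simplex {V : choiceType} (K : set (set V)) (s : set V)
  : set (V -> R) := [set t | realization K t /\ supp t `<=` s].

(** Open sets of |K| for the standard (coherent / weak) topology: U meets
    every closed simplex |s| (s in K) in a relatively open subset of |s|,
    where |s| carries the Euclidean (= pointwise, since s is finite)
    topology inherited from V -> R.  The open subsets of |K| are the
    U `&` realization K with U coherently open. *)
Definition wopen {V : choiceType} (K : set (set V)) (U : set (V -> R)) : Prop :=
  forall s, K s -> exists W : set {ptws V -> R},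
      open W /\ W `&` closed_simplex K s = U `&` closed_simplex K s.

Definition wcont {D : topologicalType} {V : choiceType} (C : set D)
  (K : set (set V)) (g : D -> V -> R) : Prop :=
  (forall p, C p -> realization K (g p)) /\
  forall U, wopen K U -> exists O : set D, open O /\ O `&` C = (g @^-1` U) `&` C.

(** The cube I^n in R^n and its boundary (empty for n = 0). *)
Definition cube (n : nat) : set 'rV[R]_n :=
  [set p | forall i, 0 <= p ord0 i <= 1].
Definition cube_bd (n : nat) : set 'rV[R]_n :=
  [set p | exists i, p ord0 i = 0 \/ p ord0 i = 1].

(** Representatives of pi_n(|K|, x): maps (I^n, bd I^n) -> (|K|, x).
    For n = 0 these are just points of |K|. *)
Definition sph_map {V : choiceType} (K : set (set V)) (n : nat) (x : V -> R)
  (g : 'rV[R]_n -> V -> R) : Prop :=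
  wcont (cube n) K g /\ forall p, cube_bd n p -> g p = x.

(** Homotopy rel boundary between two such maps (for n = 0: a path). *)
Definition htpc {V : choiceType} (K : set (set V)) (n : nat) (x : V -> R)
  (g0 g1 : 'rV[R]_n -> V -> R) : Prop :=
  exists H : R * 'rV[R]_n -> V -> R,
    [/\ @wcont (R * 'rV[R]_n)%type V ([set s : R | 0 <= s <= 1] `*` cube n) K H,
        forall p, cube n p -> H (0, p) = g0 p,
        forall p, cube n p -> H (1, p) = g1 p &
        forall s p, 0 <= s <= 1 -> cube_bd n p -> H (s, p) = x].

(** f : |K| -> |L| is a weak homotopy equivalence: it is continuous, it is
    surjective on path components (pi_0, including the case |K| empty), and
    for every n and every basepoint x in |K| the induced map
    pi_n(|K|, x) -> pi_n(|L|, f x) is bijective (for n = 0 this is the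
    bijection on path components). *)
Definition weak_equiv {V W : choiceType} (K : set (set V)) (L : set (set W))
  (f : (V -> R) -> (W -> R)) : Prop :=
  [/\ forall t, realization K t -> realization L (f t),
      forall U, wopen L U -> wopen K (f @^-1` U),
      forall y, realization L y -> exists x, realization K x &
      forall n x, realization K x ->
        (forall h, sph_map L n (f x) h ->
           exists g, sph_map K n x g /\ htpc L n (f x) (f \o g) h) /\
        (forall g0 g1, sph_map K n x g0 -> sph_map K n x g1 ->
           htpc L n (f x) (f \o g0) (f \o g1) -> htpc K n x g0 g1)].

End Realization.

(* Main.v *)
Require Import Defs.
From HB Require Import structures.
From mathcomp Require Import all_boot all_order all_algebra.
From mathcomp Require Import all_classical all_reals all_analysis.
Import Order.TTheory GRing.Theory Num.Theory.
Import numFieldNormedType.Exports.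
Local Open Scope classical_set_scope.
Local Open Scope ring_scope.
From mathcomp Require Import lra.
Section Generic.
Context {R : realType} {V : choiceType}.

Lemma wcont_post {D : topologicalType} (C : set D) (L K : set (set V))
  (F : (V -> R) -> (V -> R)) (h : D -> V -> R) :
  (forall t, realization L t -> realization K (F t)) ->
  (forall U, Defs.wopen K U -> Defs.wopen L (F @^-1` U)) ->
  wcont C L h -> wcont C K (F \o h).
Proof.
move=> FK Fo [hL ho]; split=> [p Cp|U UK]; first exact/FK/hL.
have [Ob [oO EO]] := ho _ (Fo _ UK); by exists Ob.
Qed.

Lemma wcont_pre {D D' : topologicalType} (C : set D) (C' : set D')
  (f : D' -> D) (K : set (set V)) (g : D -> V -> R) :
  continuous f -> (forall p, C' p -> C (f p)) -> wcont C K g ->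
  wcont C' K (g \o f).
Proof.
move=> fc fC [gK go]; split=> [p Cp|U UK]; first exact/gK/fC.
have [Ob [oO EO]] := go _ UK; exists (f @^-1` Ob); split.
  by apply: open_comp => // x _; exact: fc.
apply/seteqP; split=> p [Obp C'p]; split=> //.
  have : (Ob `&` C) (f p) by split=> //; exact: fC.
  by rewrite EO => -[].
have : ((g @^-1` U) `&` C) (f p) by split=> //; exact: fC.
by rewrite -EO => -[].
Qed.

Lemma cs_supp (K : set (set V)) (t : V -> R) : closed_simplex K (supp t) t <-> realization K t.
Proof. by split=> [[]//|tK]; split. Qed.

Lemma wopen_preimage (L K : set (set V)) (F : (V -> R) -> (V -> R)) :
  (forall t, realization L t -> realization K (F t)) ->
  (forall s, L s -> exists t1 t2 (Fs : {ptws V -> R} -> {ptws V -> R}),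
     [/\ K t1, K t2, continuous Fs &
      forall t, closed_simplex L s t -> Fs t = F t /\
        (supp (F t) `<=` t1 \/ supp (F t) `<=` t2)]) ->
  forall U, Defs.wopen K U -> Defs.wopen L (F @^-1` U).
Proof.
move=> FK Fs U UK s Ls.
have [t1 [t2 [G [Kt1 Kt2 Gc HG]]]] := Fs s Ls.
have [W1 [oW1 EW1]] := UK _ Kt1.
have [W2 [oW2 EW2]] := UK _ Kt2.
pose N (tau : set V) := [set f : {ptws V -> R} | exists z, ~ tau z /\ f z != 0].
have oN tau : open (N tau).
  have -> : N tau = \bigcup_(z in ~` tau) (proj z @^-1` [set x : R | x != 0]).
    by apply/seteqP; split=> f [z]; [case=> ? ?|move=> ? ?]; exists z.
  apply: bigcup_open => z _; apply: open_comp; last exact: open_neq.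
  by move=> x _; exact: proj_continuous.
pose W := (W1 `&` W2) `|` (W1 `&` N t2) `|` (W2 `&` N t1).
have oW : open W by apply: openU; [apply: openU|]; apply: openI.
exists (G @^-1` W); split; first by apply: open_comp => // x _; exact: Gc.
have key q tau Wt : realization K q -> 
   (Wt `&` closed_simplex K tau = U `&` closed_simplex K tau) ->
   supp q `<=` tau -> (Wt q <-> U q).
  move=> qK E sq; split=> H.
    by have [] : (U `&` closed_simplex K tau) q by rewrite -E.
  by have [] : (Wt `&` closed_simplex K tau) q by rewrite E.
have Nsupp q tau : N tau q <-> ~ supp q `<=` tau.
  split=> [[z [nz qz]] H|H]; first exact/nz/H.
  apply: contrapT => nN; apply: H => z qz; apply: contrapT => nz.
  by apply: nN; exists z.
apply/seteqP; split=> t [Wt st]; split=> //;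
  have [Ge [sub1|sub2]] := HG _ st; have qK := FK _ (proj1 st).
- move: Wt; rewrite /preimage /= Ge => Wt; rewrite /preimage /=.
  case: Wt => [[[w1 w2]|[w1 n2]]|[w2 n1]].
  + exact/(key _ _ _ qK EW1 sub1).
  + exact/(key _ _ _ qK EW1 sub1).
  + by move/Nsupp: n1.
- move: Wt; rewrite /preimage /= Ge => Wt; rewrite /preimage /=.
  case: Wt => [[[w1 w2]|[w1 n2]]|[w2 n1]].
  + exact/(key _ _ _ qK EW2 sub2).
  + by move/Nsupp: n2.
  + exact/(key _ _ _ qK EW2 sub2).
- rewrite /preimage /= Ge; move: Wt => /= Ut.
  have w1 := (key _ _ _ qK EW1 sub1).2 Ut.
  have [sub2|nsub2] := pselect (supp (F t) `<=` t2).
    by left; left; split=> //; exact/(key _ _ _ qK EW2 sub2).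
  by left; right; split=> //; exact/Nsupp.
- rewrite /preimage /= Ge; move: Wt => /= Ut.
  have w2 := (key _ _ _ qK EW2 sub2).2 Ut.
  have [sub1|nsub1] := pselect (supp (F t) `<=` t1).
    by left; left; split=> //; exact/(key _ _ _ qK EW1 sub1).
  by right; split=> //; exact/Nsupp.
Qed.


Lemma wcont_htpy {D : topologicalType} (C : set D) (L : set (set V))
  (Th : R -> (V -> R) -> (V -> R)) (sf : D -> R) (h : D -> V -> R) :
  (forall s, L s -> exists tau (Ts : R * {ptws V -> R} -> {ptws V -> R}),
     [/\ L tau, continuous Ts & forall u t, 0 <= u <= 1 ->
        closed_simplex L s t -> Ts (u, t) = Th u t /\ closed_simplex L tau (Th u t)]) ->
  continuous sf -> (forall p, C p -> 0 <= sf p <= 1) -> wcont C L h ->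
  wcont C L (fun p => Th (sf p) (h p)).
Proof.
move=> HT sfc sf01 [hL ho]; split.
  move=> p Cp; have [_ Ls _] := hL _ Cp.
  have [tau [Ts [_ _ HTs]]] := HT _ Ls.
  by have [_ []] := HTs (sf p) (h p) (sf01 _ Cp) (proj2 (cs_supp L (h p)) (hL _ Cp)).
move=> U UL.
pose G p := Th (sf p) (h p).
exists (\bigcup_(Ob in [set Ob | open Ob /\ Ob `&` C `<=` G @^-1` U]) Ob); split.
  by apply: bigcup_open => ? [].
apply/seteqP; split=> p.
  by case=> [[Ob [_ sub] Obp] Cp]; split=> //; exact: (sub p).
case=> Up Cp; split=> //.
set t0 := h p; set s0 := sf p.
have [_ Ls0 _] := hL _ Cp.
have [tau [Ts [Ltau Tsc HTs]]] := HT _ Ls0.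
have [W0 [oW0 EW0]] := UL _ Ltau.
have cs0 : closed_simplex L (supp t0) t0 by exact/cs_supp/hL.
have [e e0 He] : exists2 e, 0 < e & forall u, 0 <= u <= 1 ->
    `|s0 - u| <= e -> U (Th u t0).
  have : nbhs ((s0, t0 : {ptws V -> R}) : R * {ptws V -> R}) (Ts @^-1` W0).
    apply: Tsc; apply: open_nbhs_nbhs; split=> //.
    have [Te cs1] := HTs s0 t0 (sf01 _ Cp) cs0.
    have : (U `&` closed_simplex L tau) (Th s0 t0) by [].
    by rewrite -EW0 => -[]; rewrite -Te.
  case=> -[A1 A2] [/= nA1 nA2] sub.
  have /nbhs_ballP [e /= e0 be] := nA1.
  exists (e / 2); first by rewrite divr_gt0.
  move=> u u01 su.
  have [Te cs1] := HTs u t0 u01 cs0.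
  have : (W0 `&` closed_simplex L tau) (Th u t0).
    split=> //; rewrite -Te; apply: (sub (u, t0)); split=> /=.
      apply: be; rewrite /ball /=; apply: (le_lt_trans su).
      by rewrite ltr_pdivrMr // ltr_pMr // ltr1n.
    exact: (nbhs_singleton nA2).
  by rewrite EW0 => -[].
pose Ve := [set t | forall u, 0 <= u <= 1 -> `|s0 - u| <= e -> U (Th u t)].
have oVe : Defs.wopen L Ve.
  move=> s Ls; have [tau1 [Ts1 [Ltau1 Tsc1 HTs1]]] := HT _ Ls.
  have [Wt [oWt EWt]] := UL _ Ltau1.
  pose J := `[(0:R), 1] `&` closed_ball_ Num.norm s0 e.
  have cJ : compact J.
    by apply: compact_closedI; [exact: segment_compact|exact: closed_closed_ball_].
  have JP u : J u <-> 0 <= u <= 1 /\ `|s0 - u| <= e.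
    by rewrite /J /closed_ball_ /= in_itv.
  exists [set t : {ptws V -> R} | forall u, J u -> Wt (Ts1 (u, t))]; split.
    rewrite openE => t Ht.
    move/compact_near_coveringP: cJ => /(_ _ (nbhs t) (fun i x => Wt (Ts1 (x, i)))).
    apply => // x Jx.
    have nb : nbhs ((x, t) : R * {ptws V -> R}) (Ts1 @^-1` Wt).
      by apply: Tsc1; apply: open_nbhs_nbhs; split=> //; exact: Ht.
    case: nb => -[A B] /= [nA nB] AB; exists (A, B) => // -[a b] [Aa Bb]; exact: (AB (a, b)).
  apply/seteqP; split=> t [Ht st]; split=> //.
    move=> u u01 su; have [Te cs1] := HTs1 u t u01 st.
    have : (Wt `&` closed_simplex L tau1) (Th u t).
      by split=> //; rewrite -Te; apply: Ht; exact/JP.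
    by rewrite EWt => -[].
  move=> u /JP [u01 su]; have [Te cs1] := HTs1 u t u01 st.
  have : (U `&` closed_simplex L tau1) (Th u t) by split=> //; exact: Ht.
  by rewrite -EWt Te => -[].
have [Oh [oOh EOh]] := ho _ oVe.
have Ohp : Oh p.
  have : (h @^-1` Ve `&` C) p.
    split; last by [].
    move=> u u01 su; exact: (He u u01 su).
  by rewrite -EOh => -[].
exists (Oh `&` sf @^-1` ball s0 e) => //; last by split=> //; exact: ballxx.
split.
  apply: openI => //; apply: open_comp; last exact: ball_open.
  by move=> x _; exact: sfc.
move=> q [[Ohq bq] Cq].
have : (Oh `&` C) q by [].
rewrite EOh => -[Veq _]; apply: Veq; first exact: sf01.
by apply: ltW; move: bq; rewrite /ball /=.
Qed.

End Generic.
Section Cont.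
Context {R : realType}.

Definition gc (c a b : R) : R :=
  Num.min (Num.max c 0) (Num.max a 0) *
  (Num.min (Num.max a 0) (Num.max b 0) / Num.max a 0).

Lemma gc_bounds c a b : 0 <= gc c a b <= Num.max a 0.
Proof.
rewrite /gc; set A := Num.max a 0; set B := Num.max b 0; set c' := Num.min _ _.
have A0 : 0 <= A by rewrite le_max lexx orbT.
have B0 : 0 <= B by rewrite le_max lexx orbT.
have c0 : 0 <= c' by rewrite le_min A0 le_max lexx orbT.
have cA : c' <= A by rewrite ge_min lexx orbT.
have [->|Ap] := eqVneq A 0.
  by rewrite invr0 !mulr0 lexx.
have q01 : 0 <= Num.min A B / A <= 1.
  rewrite divr_ge0 ?le_min ?A0 ?B0 //= ler_pdivrMr ?lt_def ?Ap ?A0 //.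
  by rewrite mul1r ge_min lexx.
case/andP: q01 => q0 q1.
rewrite mulr_ge0 //=; apply: (le_trans _ cA).
by rewrite -[leRHS]mulr1 ler_wpM2l.
Qed.

Lemma gc_cont {T : topologicalType} (f1 f2 f3 : T -> R) :
  continuous f1 -> continuous f2 -> continuous f3 ->
  continuous (fun x => gc (f1 x) (f2 x) (f3 x)).
Proof.
move=> c1 c2 c3 x.
have cA : continuous (fun y => Num.max (f2 y) 0).
  exact: (@max_fun_continuous _ T R f2 (fun=> 0) c2 (fun _ => cvg_cst _)).
have cB : continuous (fun y => Num.max (f3 y) 0).
  exact: (@max_fun_continuous _ T R f3 (fun=> 0) c3 (fun _ => cvg_cst _)).
have cC : continuous (fun y => Num.max (f1 y) 0).
  exact: (@max_fun_continuous _ T R f1 (fun=> 0) c1 (fun _ => cvg_cst _)).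
have A0 : 0 <= Num.max (f2 x) 0 by rewrite le_max lexx orbT.
have [Ax|Ax] := eqVneq (Num.max (f2 x) 0) 0.
  have E : gc (f1 x) (f2 x) (f3 x) = 0 by rewrite /gc Ax invr0 !mulr0.
  rewrite /continuous_at E.
  apply: (@squeeze_cvgr _ _ _ _ (fun=> 0) (fun y => Num.max (f2 y) 0)).
  - by near=> y; exact: gc_bounds.
  - exact: cvg_cst.
  - have := cA x; rewrite /continuous_at Ax; exact.
rewrite /continuous_at /gc; apply: cvgM.
  exact: (@min_fun_continuous _ T R (fun y => Num.max (f1 y) 0) (fun y => Num.max (f2 y) 0) cC cA).
apply: cvgM.
  exact: (@min_fun_continuous _ T R (fun y => Num.max (f2 y) 0) (fun y => Num.max (f3 y) 0) cA cB).
apply: cvgV => //; exact: cA.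
Unshelve. all: end_near. Qed.

Lemma ptws_cont {T : topologicalType} {V : choiceType} (f : T -> {ptws V -> R}) :
  (forall z, continuous (fun x => f x z)) -> continuous f.
Proof.
move=> H x; apply/cvg_sup => i.
move=> U [? /= [[W oW <-]]] /= Wsfz /filterS; apply; apply: (H i).
exact: open_nbhs_nbhs.
Qed.

Lemma sum_cont {T : topologicalType} {I : Type} (l : seq I) (F : I -> T -> R) :
  (forall i, continuous (F i)) -> continuous (fun x => \sum_(i <- l) F i x).
Proof.
move=> H; elim: l => [|i l IH].
  by under eq_fun do rewrite big_nil; move=> x; exact: cvg_cst.
under eq_fun do rewrite big_cons.
by move=> x; apply: continuousD; [exact: H|exact: IH].
Qed.

End Cont.
Section Sums.
Context {R : realType} {T : choiceType}.

Lemma sum_supp (F : T -> R) (l1 l2 : seq T) : uniq l1 -> uniq l2 ->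
  (forall z, F z != 0 -> z \in l1) -> (forall z, F z != 0 -> z \in l2) ->
  \sum_(z <- l1) F z = \sum_(z <- l2) F z.
Proof.
move=> u1 u2 h1 h2.
have E l : \sum_(z <- l) F z = \sum_(z <- [seq z <- l | F z != 0]) F z.
  rewrite big_filter [RHS]big_mkcond /=; apply: eq_bigr => z _.
  by case: eqVneq => [->|].
rewrite (E l1) (E l2); apply: perm_big; apply: uniq_perm.
- exact: filter_uniq.
- exact: filter_uniq.
move=> z; rewrite !mem_filter; case: (boolP (F z != 0)) => //= Fz.
by rewrite h1 // h2.
Qed.

Lemma fsum_seq (F : T -> R) (l : seq T) : uniq l ->
  (forall z, F z != 0 -> z \in l) ->
  \sum_(z \in supp F) F z = \sum_(z <- l) F z.
Proof.
move=> ul hl.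
have fin : finite_set (supp F).
  apply: (sub_finite_set _ (finite_seq l)) => z /= Fz; exact: hl.
rewrite fsbig_finite //; apply: sum_supp => //.
  by move=> z Fz; rewrite in_fset_set // inE.
Qed.

Lemma sum_ge_term (F : T -> R) (l : seq T) z : uniq l -> (forall z, 0 <= F z) ->
  z \in l -> F z <= \sum_(z <- l) F z.
Proof.
move=> ul F0 zl; rewrite (bigD1_seq z) //= lerDl.
by apply: sumr_ge0 => i _.
Qed.

Lemma sum_eq0_term (F : T -> R) (l : seq T) z : (forall z, 0 <= F z) ->
  z \in l -> \sum_(z <- l) F z = 0 -> F z = 0.
Proof.
move=> F0 zl /eqP; rewrite psumr_eq0; last by move=> i _.
by move/allP/(_ _ zl)/eqP.
Qed.

End Sums.
Section Spec.
Context {R : realType} {Z : choiceType} (X Y : set Z) (v : Z).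

Definition XA := X `\` (X `&` Y).
Definition YA := Y `\` (X `&` Y).
Definition ind (P : set Z) (t : Z -> R) (z : Z) : R := if `[< P z >] then t z else 0.
Definition sA (P : set Z) (l : seq Z) (t : Z -> R) := \sum_(z <- l) ind P t z.
Definition mm (a b : R) := Num.min (Num.max a 0) (Num.max b 0).
Definition phiab (a b : R) (t : Z -> R) : Z -> R := fun z =>
  t z - (if `[< XA z >] then gc (t z) a b else 0)
      - (if `[< YA z >] then gc (t z) b a else 0)
      + (if z == v then mm a b *+ 2 else 0).

Lemma gc_eq (c a b : R) : 0 <= c <= a -> 0 <= b -> gc c a b = c * (Num.min a b / a).
Proof.
case/andP=> c0 ca b0; have a0 := le_trans c0 ca.
by rewrite /gc (max_l c0) (max_l a0) (max_l b0) (min_l ca).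
Qed.

Lemma gc0 (a b : R) : gc 0 a b = 0.
Proof.
by rewrite /gc maxxx min_l ?mul0r // le_max lexx orbT.
Qed.

Lemma gc_mm0 (c a b : R) : mm a b = 0 -> gc c a b = 0.
Proof. by rewrite /gc /mm => ->; rewrite mul0r mulr0. Qed.

Lemma mm_eq (a b : R) : 0 <= a -> 0 <= b -> mm a b = Num.min a b.
Proof. by move=> a0 b0; rewrite /mm (max_l a0) (max_l b0). Qed.

Lemma mmC (a b : R) : mm a b = mm b a.
Proof. by rewrite /mm minC. Qed.

Context (cover : X `|` Y = setT) (vX : X v) (vY : Y v).

Lemma XA_notYA {z} : XA z -> ~ YA z.
Proof. by case=> Xz nXY [Yz _]; apply: nXY. Qed.

Lemma XA_neqv {z} : XA z -> z != v.
Proof. by case=> _ nXY; apply/eqP => zv; apply: nXY; rewrite zv. Qed.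

Lemma YA_neqv {z} : YA z -> z != v.
Proof. by case=> _ nXY; apply/eqP => zv; apply: nXY; rewrite zv. Qed.

Lemma notX_YA {z} : ~ X z -> YA z.
Proof.
move=> nX; have : (X `|` Y) z by rewrite cover.
by case=> // Yz; split=> // -[].
Qed.

Lemma notY_XA {z} : ~ Y z -> XA z.
Proof.
move=> nY; have : (X `|` Y) z by rewrite cover.
by case=> // Xz; split=> // -[].
Qed.

Section Props.
Variables (l : seq Z) (t : Z -> R).
Hypotheses (ul : uniq l) (t0 : forall z, 0 <= t z) (tl : forall z, t z != 0 -> z \in l).
Let a := sA XA l t.
Let b := sA YA l t.

Lemma ind_ge0 P z : 0 <= ind P t z.
Proof. by rewrite /ind; case: asboolP. Qed.

Lemma sA_ge0 P : 0 <= sA P l t.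
Proof. by apply: sumr_ge0 => z _; exact: ind_ge0. Qed.

Lemma ind_le P z : P z -> t z <= sA P l t.
Proof.
move=> Pz; have [tz0|tzn0] := eqVneq (t z) 0; first by rewrite tz0 sA_ge0.
have -> : t z = ind P t z by rewrite /ind asboolT.
by apply: sum_ge_term => //; [exact: ind_ge0|exact: tl].
Qed.

Let a0 : 0 <= a. Proof. exact: sA_ge0. Qed.
Let b0 : 0 <= b. Proof. exact: sA_ge0. Qed.

Lemma gcX z : XA z -> gc (t z) a b = t z * (mm a b / a).
Proof.
by move=> xz; rewrite gc_eq ?t0 ?ind_le // mm_eq.
Qed.

Lemma gcY z : YA z -> gc (t z) b a = t z * (mm a b / b).
Proof.
by move=> yz; rewrite gc_eq ?t0 ?ind_le // mm_eq // minC.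
Qed.

Lemma mm_le_a : mm a b <= a.
Proof. by rewrite mm_eq // ge_min lexx. Qed.
Lemma mm_le_b : mm a b <= b.
Proof. by rewrite mm_eq // ge_min lexx orbT. Qed.
Lemma mm_ge0 : 0 <= mm a b.
Proof. by rewrite mm_eq // le_min a0 b0. Qed.

Lemma q_le1 {c : R} : 0 <= c -> mm a b <= c -> 0 <= mm a b / c <= 1.
Proof.
move=> c0 mc; have [->|cn0] := eqVneq c 0; first by rewrite invr0 mulr0 lexx ler01.
have cp : 0 < c by rewrite lt_def cn0 c0.
apply/andP; split; first by apply: divr_ge0 => //; exact: mm_ge0.
by rewrite ler_pdivrMr // mul1r.
Qed.

Lemma phi_ge0 z : 0 <= phiab a b t z.
Proof.
rewrite /phiab; case: (asboolP (XA z)) => [xz|nxz].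
  rewrite asboolF; last exact: XA_notYA.
  rewrite (negPf (XA_neqv xz)) subr0 addr0 gcX //.
  have /andP[_ q1] := q_le1 a0 mm_le_a.
  by rewrite subr_ge0 -[leRHS]mulr1 ler_wpM2l.
case: (asboolP (YA z)) => [yz|nyz].
  rewrite (negPf (YA_neqv yz)) subr0 addr0 gcY //.
  have /andP[_ q1] := q_le1 b0 mm_le_b.
  by rewrite subr_ge0 -[leRHS]mulr1 ler_wpM2l.
rewrite !subr0; case: eqP => _; last by rewrite addr0.
by rewrite addr_ge0 // mulrn_wge0 // mm_ge0.
Qed.

Lemma phi_supp z : phiab a b t z != 0 -> t z != 0 \/ z = v.
Proof.
rewrite /phiab => H; have [tz|] := eqVneq (t z) 0; last by left.
right; apply/eqP; apply: contraNT H => zv.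
by rewrite (negPf zv) tz !gc0 !if_same !subr0 addr0.
Qed.

Lemma phi_id : mm a b = 0 -> phiab a b t = t.
Proof.
move=> m0; have m0' : mm b a = 0 by rewrite mmC.
apply/funext => z; rewrite /phiab (@gc_mm0 (t z) _ _ m0) (@gc_mm0 (t z) _ _ m0') m0 mul0rn.
by rewrite !if_same !subr0 addr0.
Qed.

Lemma phi_XY : (forall z, phiab a b t z != 0 -> X z) \/
               (forall z, phiab a b t z != 0 -> Y z).
Proof.
have [ba|ab] := leP b a.
  left=> z Hz; apply: contrapT => nX; move: Hz.
  suff -> : phiab a b t z = 0 by rewrite eqxx.
  have yz := notX_YA nX.
  rewrite /phiab asboolF; last by move=> /XA_notYA.
  rewrite asboolT // (negPf (YA_neqv yz)) addr0 subr0 gcY // mm_eq // min_r //.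
  have [b00|bn0] := eqVneq b 0.
    have : t z <= b by exact: ind_le.
    rewrite b00 => tz; have -> : t z = 0 by apply/eqP; rewrite eq_le tz t0.
    by rewrite mul0r subrr.
  by rewrite divff // mulr1 subrr.
right=> z Hz; apply: contrapT => nY; move: Hz.
suff -> : phiab a b t z = 0 by rewrite eqxx.
have xz := notY_XA nY.
rewrite /phiab asboolT // asboolF; last exact: XA_notYA.
rewrite (negPf (XA_neqv xz)) addr0 !subr0 gcX // mm_eq // min_l ?ltW //.
have [a00|an0] := eqVneq a 0.
  have : t z <= a by exact: ind_le.
  rewrite a00 => tz; have -> : t z = 0 by apply/eqP; rewrite eq_le tz t0.
  by rewrite mul0r subrr.
by rewrite divff // mulr1 subrr.
Qed.

Lemma phi_sum : v \in l -> \sum_(z <- l) phiab a b t z = \sum_(z <- l) t z.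
Proof.
move=> vl; rewrite /phiab big_split /= !sumrB.
have key (x m : R) : 0 <= m -> m <= x -> x * (m / x) = m.
  move=> m0 mx; have [x0|xn0] := eqVneq x 0; last by rewrite mulrCA divff ?mulr1.
  rewrite x0 in mx *; have -> : m = 0 by apply/eqP; rewrite eq_le mx m0.
  by rewrite mul0r.
have EX : \sum_(z <- l) (if `[< XA z >] then gc (t z) a b else 0) = mm a b.
  rewrite (eq_bigr (fun z => ind XA t z * (mm a b / a))); last first.
    move=> z _; rewrite /ind; case: asboolP => [xz|]; last by rewrite mul0r.
    exact: gcX.
  rewrite -big_distrl /=; exact: key mm_ge0 mm_le_a.
have EY : \sum_(z <- l) (if `[< YA z >] then gc (t z) b a else 0) = mm a b.
  rewrite (eq_bigr (fun z => ind YA t z * (mm a b / b))); last first.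
    move=> z _; rewrite /ind; case: asboolP => [yz|]; last by rewrite mul0r.
    exact: gcY.
  rewrite -big_distrl /=; exact: key mm_ge0 mm_le_b.
have EV : \sum_(z <- l) (if z == v then mm a b *+ 2 else 0) = mm a b *+ 2.
  rewrite (bigD1_seq v) //= eqxx big1 ?addr0 //.
  by move=> z /negPf ->.
rewrite EX EY EV; rewrite mulr2n; lra.
Qed.

Lemma phi_cross : 0 < mm a b ->
  (exists x, t x != 0 /\ XA x) /\ (exists y, t y != 0 /\ YA y).
Proof.
move=> mp.
have ap : 0 < a by apply: lt_le_trans mp mm_le_a.
have bp : 0 < b by apply: lt_le_trans mp mm_le_b.
split.
  apply: contrapT => H; move: ap; rewrite lt_def => /andP[/negP + _]; apply.
  apply/eqP; apply: big1 => z _; rewrite /ind; case: asboolP => // xz.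
  have [//|tz] := eqVneq (t z) 0; exfalso; apply: H; by exists z.
apply: contrapT => H; move: bp; rewrite lt_def => /andP[/negP + _]; apply.
apply/eqP; apply: big1 => z _; rewrite /ind; case: asboolP => // yz.
have [//|tz] := eqVneq (t z) 0; exfalso; apply: H; by exists z.
Qed.

End Props.
End Spec.
Section H.
Context {R : realType} {T : topologicalType}.
Lemma contD (f g : T -> R) : continuous f -> continuous g -> continuous (fun x => f x + g x).
Proof. by move=> cf cg x; apply: cvgD; [exact: cf|exact: cg]. Qed.
Lemma contB (f g : T -> R) : continuous f -> continuous g -> continuous (fun x => f x - g x).
Proof. by move=> cf cg x; apply: cvgB; [exact: cf|exact: cg]. Qed.
Lemma contM (f g : T -> R) : continuous f -> continuous g -> continuous (fun x => f x * g x).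
Proof. by move=> cf cg x; apply: cvgM; [exact: cf|exact: cg]. Qed.
Lemma contC (c : R) : continuous (fun _ : T => c).
Proof. exact: cst_continuous. Qed.
End H.

Section Main.
Context {R : realType} {Z : choiceType} (d : Z -> Z -> \bar R)
  (d_sym : forall x y, d x y = d y x)
  (d_refl : forall x, d x x = 0%E)
  (X Y : set Z) (cover : X `|` Y = setT)
  (r : R) (r_ge0 : 0 <= r)
  (v : Z) (vA : (X `&` Y) v)
  (hv : forall x y, (X `\` (X `&` Y)) x -> (Y `\` (X `&` Y)) y ->
          (d x y <= r%:E)%E -> (d x v <= r%:E)%E /\ (d y v <= r%:E)%E)
  (h1 : forall x y, (X `\` (X `&` Y)) x -> (Y `\` (X `&` Y)) y ->
        (d x y <= r%:E)%E ->
        forall w, (X `&` Y) w -> (d w x <= r%:E)%E -> (d w y <= r%:E)%E ->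
          (d v w <= r%:E)%E).

Let vX : X v. Proof. by case: vA. Qed.
Let vY : Y v. Proof. by case: vA. Qed.

Let nX_YA z : ~ X z -> YA X Y z. Proof. exact: notX_YA. Qed.
Let nY_XA z : ~ Y z -> XA X Y z. Proof. exact: notY_XA. Qed.

Definition pw (S : set Z) := forall x y, S x -> S y -> (d x y <= r%:E)%E.

Lemma dvv : (d v v <= r%:E)%E.
Proof. by rewrite d_refl lee_fin. Qed.

Lemma cross {S : set Z} {x y} : pw S -> S x -> S y -> XA X Y x -> YA X Y y ->
  forall z, S z -> (d z v <= r%:E)%E.
Proof.
move=> pS Sx Sy xX yY z Sz.
have dxy := pS _ _ Sx Sy.
have [dxv dyv] := hv _ _ xX yY dxy.
have [zX|nzX] := pselect (X z); last first.
  have zY := nX_YA _ nzX; by have [] := hv _ _ xX zY (pS _ _ Sx Sz).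
have [zY|nzY] := pselect (Y z); last first.
  have zX' := nY_XA _ nzY.
  by have [] := hv _ _ zX' yY (pS _ _ Sz Sy).
rewrite d_sym; apply: (h1 _ _ xX yY dxy) => //; exact: pS.
Qed.

Lemma pw_addv {S : set Z} {x y} : pw S -> S x -> S y -> XA X Y x -> YA X Y y ->
  pw (S `|` [set v]).
Proof.
move=> pS Sx Sy xX yY a b [Sa|->] [Sb|->].
- exact: pS.
- exact: (cross pS Sx Sy xX yY _ Sa).
- by rewrite d_sym; exact: (cross pS Sx Sy xX yY _ Sb).
- exact: dvv.
Qed.

Notation L := (VR d r setT).
Notation K := (VR d r X `|` VR d r Y).

Definition efs (A : set Z) : seq Z := finmap.enum_fset (fset_set A).
Lemma in_efs (A : set Z) (z : Z) : finite_set A -> (z \in efs A) = (z \in A).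
Proof. move=> fA; exact: (in_fset_set fA z). Qed.
Lemma efs_uniq (A : set Z) : uniq (efs A).
Proof. exact: finmap.fset_uniq. Qed.

Definition phiL (l : seq Z) (t : Z -> R) : Z -> R :=
  phiab X Y v (sA (XA X Y) l t) (sA (YA X Y) l t) t.
Definition phi (t : Z -> R) : Z -> R := phiL (efs (supp t)) t.
Definition hom (u : R) (t : Z -> R) : Z -> R :=
  fun z => (1 - u) * t z + u * phi t z.
Definition crossing (S : set Z) := exists x y, [/\ S x, S y, XA X Y x & YA X Y y].

Lemma VR_of (B S : set Z) : finite_set S -> S !=set0 -> S `<=` B -> pw S -> VR d r B S.
Proof. by move=> *; split. Qed.

Lemma supp_nz {t : Z -> R} : \sum_(z \in supp t) t z = 1 -> supp t !=set0.
Proof.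
move=> s1; apply/set0P/eqP => s0; move: s1; rewrite s0 fsbig_set0 => /eqP.
by rewrite eq_sym oner_eq0.
Qed.

Lemma suppP (t : Z -> R) z : supp t z <-> t z != 0.
Proof. by []. Qed.

Lemma realLP {t : Z -> R} : realization L t ->
  [/\ forall z, 0 <= t z, finite_set (supp t), pw (supp t) &
      \sum_(z \in supp t) t z = 1].
Proof. by case=> t0 [fin _ _ pwt] s1; split. Qed.

Lemma KL {t : Z -> R} : realization K t -> realization L t.
Proof.
case=> t0 KS s1; split=> //.
by case: KS => -[fin ne _ pwt]; split.
Qed.

Lemma ind_nz {P : set Z} {t : Z -> R} {z} : ind P t z != 0 -> t z != 0.
Proof. by rewrite /ind; case: asboolP => //; rewrite eqxx. Qed.

Lemma phiL_eq {l : seq Z} {t : Z -> R} : realization L t -> uniq l ->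
  (forall z, t z != 0 -> z \in l) -> phiL l t = phi t.
Proof.
move=> /realLP [t0 fin _ _] ul tl; rewrite /phiL /phi.
have E P : sA P l t = sA P (efs (supp t)) t.
  apply: sum_supp => //; first exact: efs_uniq.
    by move=> z /ind_nz; exact: tl.
  by move=> z /ind_nz tz; rewrite in_efs // inE.
by rewrite !E.
Qed.

Lemma phi_main {t : Z -> R} : realization L t ->
  [/\ realization K (phi t),
      (forall z, phi t z != 0 -> t z != 0 \/ z = v),
      ((supp (phi t) `<=` X) \/ (supp (phi t) `<=` Y)),
      \sum_(z \in supp (phi t)) phi t z = 1 &
      (~ crossing (supp t) -> phi t = t)].
Proof.
move=> tL; have [t0 fin pwt s1] := realLP tL.
pose l := efs (supp t `|` [set v]).
have finl : finite_set (supp t `|` [set v]) by rewrite finite_setU; split=> //; exact: finite_set1.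
have ul : uniq l by exact: efs_uniq.
have vl : v \in l by rewrite in_efs // inE; right.
have tl : forall z, t z != 0 -> z \in l by move=> z tz; rewrite in_efs // inE; left.
rewrite -(phiL_eq tL ul tl).
have q0 := phi_ge0 X Y v vX vY _ _ ul t0 tl.
have qs := phi_supp X Y v l t.
have qXY := phi_XY X Y v cover vX vY _ _ ul t0 tl.
have ql : forall z, phiL l t z != 0 -> z \in l.
  by move=> z /qs [/tl //|->].
have qsum : \sum_(z \in supp (phiL l t)) phiL l t z = 1.
  rewrite (fsum_seq _ _ ul ql) (phi_sum X Y v _ _ ul t0 tl vl) -s1 (fsum_seq _ _ ul tl) //.
have nc : ~ crossing (supp t) -> phiL l t = t.
  move=> nc; apply: phi_id; apply/eqP; rewrite eq_le (mm_ge0 X Y _ _ t0) andbT leNgt.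
  apply/negP => mp; have [[x [tx xX]] [y [ty yY]]] := phi_cross X Y _ _ t0 mp.
  by apply: nc; exists x, y.
have qXY' : supp (phiL l t) `<=` X \/ supp (phiL l t) `<=` Y.
  by case: qXY => H; [left|right] => z /H.
split=> //.
split=> //.
have pwq : pw (supp (phiL l t)).
  have [cr|ncr] := pselect (crossing (supp t)); last by rewrite nc.
  case: cr => x [y [Sx Sy xX yY]].
  have pw2 := pw_addv pwt Sx Sy xX yY.
  move=> a b /qs [ta|->] /qs [tb|->]; apply: pw2; by [left|right].
have finq : finite_set (supp (phiL l t)).
  apply: (sub_finite_set _ (finite_seq l)) => z /= qz; exact: ql.
case: qXY' => sub; [left|right]; apply: VR_of => //; exact: supp_nz.
Qed.

Lemma phi_fixK {t : Z -> R} : realization K t -> phi t = t.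
Proof.
move=> tK; have [_ _ _ _ ->] := phi_main (KL tK) => //.
case: tK => _ [] [_ _ sub _] _ [x [y [Sx Sy [xX nx] [yY ny]]]].
- by apply: ny; split=> //; exact: sub.
- by apply: nx; split=> //; exact: sub.
Qed.


Lemma proj_cont (z : Z) : continuous (fun t : {ptws Z -> R} => t z).
Proof. exact: proj_continuous. Qed.

Lemma sA_cont (P : set Z) (l : seq Z) : continuous (fun t : {ptws Z -> R} => sA P l t).
Proof.
apply: (sum_cont l (fun w (t : {ptws Z -> R}) => ind P t w)) => w.
rewrite /ind; case: asboolP => _; first exact: proj_cont.
exact: cst_continuous.
Qed.

Lemma phiL_cont (l : seq Z) : continuous (phiL l : {ptws Z -> R} -> {ptws Z -> R}).
Proof.
apply: ptws_cont => z.
have c1 := sA_cont (XA X Y) l; have c2 := sA_cont (YA X Y) l.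
have cmm : continuous (fun t : {ptws Z -> R} => mm (sA (XA X Y) l t) (sA (YA X Y) l t)).
  rewrite /mm; apply: min_fun_continuous; apply: max_fun_continuous => //;
    exact: cst_continuous.
have cz := proj_cont z.
rewrite /phiL /phiab.
apply: contD; [apply: contB; [apply: contB|]|].
- exact: cz.
- case: asboolP => _; last exact: contC.
  by apply: gc_cont.
- case: asboolP => _; last exact: contC.
  by apply: gc_cont.
- case: eqP => _; last exact: contC.
  have -> : (fun t : {ptws Z -> R} => mm (sA (XA X Y) l t) (sA (YA X Y) l t) *+ 2) =
     (fun t => mm (sA (XA X Y) l t) (sA (YA X Y) l t) + mm (sA (XA X Y) l t) (sA (YA X Y) l t)).
    by apply/funext => t; rewrite mulr2n.
  exact: contD.
Qed.

Lemma csL_of {tau : set Z} {q : Z -> R} : L tau -> (forall z, 0 <= q z) ->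
  \sum_(z \in supp q) q z = 1 -> supp q `<=` tau -> closed_simplex L tau q.
Proof.
move=> [fin _ _ pwt] q0 s1 sub; split=> //; split=> //.
apply: VR_of => //.
- exact: sub_finite_set fin.
- exact: supp_nz.
- by move=> x y /sub Sx /sub Sy; exact: pwt.
Qed.

Lemma noncross_K {S : set Z} : L S -> ~ crossing S -> K S.
Proof.
move=> [fin ne _ pwS] nc.
have [[x [Sx xX]]|nx] := pselect (exists x, S x /\ XA X Y x).
  left; split=> // y Sy; apply: contrapT => nyX.
  by apply: nc; exists x, y; split=> //; exact: nX_YA.
right; split=> // y Sy; apply: contrapT => nyY.
by apply: nx; exists y; split=> //; exact: nY_XA.
Qed.

Lemma addv_L {S : set Z} : L S -> crossing S -> L (S `|` [set v]).
Proof.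
move=> [fin ne _ pwS] [x [y [Sx Sy xX yY]]]; split=> //.
- by rewrite finite_setU; split=> //; exact: finite_set1.
- by exists v; right.
- exact: pw_addv pwS Sx Sy xX yY.
Qed.

Lemma addv_K (S B : set Z) : L S -> crossing S -> B v ->
  VR d r B ((S `|` [set v]) `&` B).
Proof.
move=> LS cr Bv; have [fin _ _ pw2] := addv_L LS cr; split.
- exact: finite_setIl.
- by exists v; split=> //; right.
- by move=> z [].
- by move=> a b [Sa _] [Sb _]; exact: pw2.
Qed.

Lemma phi_open (U : set (Z -> R)) : Defs.wopen K U -> Defs.wopen L (phi @^-1` U).
Proof.
apply: wopen_preimage; first by move=> t /phi_main [].
move=> S LS; have [finS _ _ _] := LS.
pose l := efs (S `|` [set v]).
have finl : finite_set (S `|` [set v]) by rewrite finite_setU; split=> //; exact: finite_set1.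
have ul : uniq l by exact: efs_uniq.
have tl (t : Z -> R) : closed_simplex L S t -> forall z, t z != 0 -> z \in l.
  by move=> [_ sub] z tz; rewrite in_efs // inE; left; exact: sub.
have [cr|ncr] := pselect (crossing S).
  exists ((S `|` [set v]) `&` X), ((S `|` [set v]) `&` Y), (phiL l); split.
  - by left; apply: addv_K.
  - by right; apply: addv_K.
  - exact: phiL_cont.
  move=> t st; have [tL sub] := st.
  split; first exact: (phiL_eq tL ul (tl _ st)).
  have [_ qs qXY _ _] := phi_main tL.
  have H z : phi t z != 0 -> (S `|` [set v]) z.
    by case/qs => [tz|->]; [left; exact: sub|right].
  case: qXY => XY; [left|right]; move=> z qz; (split; [exact: H | exact: XY]).
exists S, S, (phiL l); split.
- exact: noncross_K.
- exact: noncross_K.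
- exact: phiL_cont.
move=> t st; have [tL sub] := st.
split; first exact: (phiL_eq tL ul (tl _ st)).
have [_ _ _ _ ->] := phi_main tL; first by left.
move=> [x [y [Sx Sy xX yY]]]; apply: ncr; exists x, y; split=> //; exact: sub.
Qed.

Lemma cont_comp2 {A B : topologicalType} (f : A -> B) (g : B -> R) :
  continuous f -> continuous g -> continuous (fun x => g (f x)).
Proof. by move=> cf cg x; apply: continuous_comp; [exact: cf|exact: cg]. Qed.

Lemma cont_fst : continuous (fst : R * {ptws Z -> R} -> R).
Proof. by move=> [x y]; exact: cvg_fst. Qed.

Lemma cont_snd : continuous (snd : R * {ptws Z -> R} -> {ptws Z -> R}).
Proof. by move=> [x y]; exact: cvg_snd. Qed.

Definition Tsl (l : seq Z) (p : R * {ptws Z -> R}) : {ptws Z -> R} :=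
  fun z => (1 - p.1) * p.2 z + p.1 * phiL l p.2 z.

Lemma Tsl_cont l : continuous (Tsl l).
Proof.
apply: ptws_cont => z; rewrite /Tsl.
have c1 := cont_fst.
have c2 : continuous (fun p : R * {ptws Z -> R} => p.2 z).
  exact: (@cont_comp2 _ _ snd (fun t : {ptws Z -> R} => t z) cont_snd (proj_cont z)).
have c3 : continuous (fun p : R * {ptws Z -> R} => phiL l p.2 z).
  apply: (@cont_comp2 _ _ snd (fun t : {ptws Z -> R} => phiL l t z) cont_snd).
  exact: (@cont_comp2 {ptws Z -> R} {ptws Z -> R} (phiL l) (fun t : {ptws Z -> R} => t z) (phiL_cont l) (proj_cont z)).
apply: contD; apply: contM => //.
exact: contB (contC _) c1.
Qed.

Lemma hom_req (S : set Z) : L S -> exists tau (Ts : R * {ptws Z -> R} -> {ptws Z -> R}),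
  [/\ L tau, continuous Ts & forall u t, 0 <= u <= 1 ->
     closed_simplex L S t -> Ts (u, t) = hom u t /\ closed_simplex L tau (hom u t)].
Proof.
move=> LS; have [finS _ _ _] := LS.
pose l := efs (S `|` [set v]).
have finl : finite_set (S `|` [set v]) by rewrite finite_setU; split=> //; exact: finite_set1.
have ul : uniq l by exact: efs_uniq.
have vl : v \in l by rewrite in_efs // inE; right.
have tl (t : Z -> R) : closed_simplex L S t -> forall z, t z != 0 -> z \in l.
  by move=> [_ sub] z tz; rewrite in_efs // inE; left; exact: sub.
have Teq u t : closed_simplex L S t -> Tsl l (u, t) = hom u t.
  move=> st; apply/funext => z; rewrite /Tsl /hom /=.
  by rewrite (phiL_eq (proj1 st) ul (tl _ st)).
have key u t : 0 <= u <= 1 -> closed_simplex L S t ->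
  [/\ forall z, 0 <= hom u t z,
      \sum_(z \in supp (hom u t)) hom u t z = 1 &
      forall z, hom u t z != 0 -> t z != 0 \/ phi t z != 0].
  move=> /andP[u0 u1] st; have [tL sub] := st.
  have [t0 _ _ s1] := realLP tL.
  have [[q0 _ _] qs _ qsum _] := phi_main tL.
  have hnz z : hom u t z != 0 -> t z != 0 \/ phi t z != 0.
    rewrite /hom => H; apply: contrapT => /not_orP [/negP/negPn/eqP t0z /negP/negPn/eqP q0z].
    by move: H; rewrite t0z q0z !mulr0 addr0 eqxx.
  have ql z : phi t z != 0 -> z \in l by case/qs => [/(tl _ st)//|->].
  split=> //.
  - move=> z; rewrite /hom; apply: addr_ge0; apply: mulr_ge0 => //.
    by rewrite subr_ge0.
  - rewrite (fsum_seq _ _ ul); last by move=> z /hnz [/(tl _ st)|/ql].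
    rewrite /hom big_split /= -!mulr_sumr.
    rewrite -(fsum_seq _ _ ul (tl _ st)) s1 -(fsum_seq _ _ ul ql) qsum.
    by rewrite !mulr1 subrK.
have [cr|ncr] := pselect (crossing S).
  exists (S `|` [set v]), (Tsl l); split.
  - exact: addv_L.
  - exact: Tsl_cont.
  move=> u t u01 st; split; first exact: Teq.
  have [h0 hs hnz] := key u t u01 st.
  apply: csL_of => //; first exact: addv_L.
  move=> z /hnz [tz|qz]; first by left; exact: (proj2 st).
  have [_ qs _ _ _] := phi_main (proj1 st).
  by case: (qs _ qz) => [tz|->]; [left; exact: (proj2 st)|right].
exists S, (Tsl l); split => //.
- exact: Tsl_cont.
move=> u t u01 st; split; first exact: Teq.
have [h0 hs hnz] := key u t u01 st.
apply: csL_of => //.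
have E : phi t = t.
  have [_ _ _ _ E] := phi_main (proj1 st); apply: E.
  move=> [x [y [Sx Sy xX yY]]]; apply: ncr; exists x, y; split=> //; exact: (proj2 st).
by move=> z /hnz; rewrite E; case=> tz; exact: (proj2 st).
Qed.

End Main.
Lemma cs_KL {R : realType} {Z : choiceType} (d : Z -> Z -> \bar R) (X Y : set Z) (r : R)
  (S : set Z) : (VR d r X `|` VR d r Y) S ->
  closed_simplex (VR d r X `|` VR d r Y) S = closed_simplex (VR d r setT) S :> set (Z -> R).
Proof.
move=> KS; apply/seteqP; split=> t; case=> tR sub.
  by split=> //; exact: (KL d X Y r tR).
split=> //.
case: tR => t0 [fin ne _ pwt] s1; split=> //.
have VRsub B : VR d r B S -> VR d r B (supp t).
  case=> finS _ SB pwS; split.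
  - exact: sub_finite_set finS.
  - exact: supp_nz.
  - by move=> z /sub /SB.
  - by move=> a b /sub Sa /sub Sb; exact: pwS.
by case: KS => KS; [left|right]; exact: VRsub.
Qed.

Lemma cont_fst_gen {A B : topologicalType} : continuous (fst : A * B -> A).
Proof. by move=> [x y]; exact: cvg_fst. Qed.
Lemma cont_snd_gen {A B : topologicalType} : continuous (snd : A * B -> B).
Proof. by move=> [x y]; exact: cvg_snd. Qed.

Theorem proposition10p5 (R : realType) (Z : choiceType)
  (d : Z -> Z -> \bar R)
  (d_sym : forall x y, d x y = d y x)
  (d_refl : forall x, d x x = 0%E)
  (d_ge0 : forall x y, (0 <= d x y)%E)
  (X Y : set Z) (cover : X `|` Y = setT)
  (r : R) (r_ge0 : 0 <= r)
  (v : Z) (vA : (X `&` Y) v)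
  (hv : forall x y, (X `\` (X `&` Y)) x -> (Y `\` (X `&` Y)) y ->
          (d x y <= r%:E)%E -> (d x v <= r%:E)%E /\ (d y v <= r%:E)%E)
  (hcase :
     (forall x y, (X `\` (X `&` Y)) x -> (Y `\` (X `&` Y)) y ->
        (d x y <= r%:E)%E ->
        forall w, (X `&` Y) w -> (d w x <= r%:E)%E -> (d w y <= r%:E)%E ->
          (d v w <= r%:E)%E)
     \/ (diam d (X `&` Y) <= r%:E)%E
     \/ X `&` Y = [set v]) :
  @weak_equiv R Z Z (VR d r X `|` VR d r Y) (VR d r setT) (@id (Z -> R)).
Proof.
have h1 : forall x y, (X `\` (X `&` Y)) x -> (Y `\` (X `&` Y)) y ->
        (d x y <= r%:E)%E ->
        forall w, (X `&` Y) w -> (d w x <= r%:E)%E -> (d w y <= r%:E)%E ->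
          (d v w <= r%:E)%E.
  case: hcase => [H|[Hd|HA]]; first exact: H.
    move=> x y _ _ _ w Aw _ _; apply: le_trans Hd.
    by apply: ereal_sup_ubound; exists (v, w).
  move=> x y _ _ _ w Aw _ _; move: Aw; rewrite HA => ->.
  by rewrite d_refl lee_fin.
have PM t := @phi_main R Z d d_sym d_refl X Y cover r r_ge0 v vA hv h1 t.
have PO := @phi_open R Z d d_sym d_refl X Y cover r r_ge0 v vA hv h1.
have HR := @hom_req R Z d d_sym d_refl X Y cover r r_ge0 v vA hv h1.
have FK t := @phi_fixK R Z d d_sym d_refl X Y cover r r_ge0 v vA hv h1 t.
have FL (t : Z -> R) : realization (VR d r setT) t -> realization (VR d r X `|` VR d r Y) (phi X Y v t).
  by move=> /PM [].
split.
- by move=> t; exact: KL.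
- move=> U UL S KS.
  have LS : VR d r setT S by case: KS => -[fin ne _ pw]; split.
  have [W [oW EW]] := UL S LS.
  by exists W; split=> //; rewrite cs_KL.
- move=> y yL; exists (phi X Y v y); exact: FL.
move=> n x xK; split.
  move=> h [hw hb]; exists (phi X Y v \o h); split.
    split; first exact: wcont_post FL PO hw.
    by move=> p bp /=; rewrite hb // FK.
  exists (fun q : R * 'rV[R]_n => hom X Y v (1 - q.1) (h q.2)); split.
  - apply: (@wcont_htpy R Z _ _ _ (hom X Y v) (fun q : R * 'rV[R]_n => 1 - q.1) (h \o snd)).
    + exact: HR.
    + exact: contB (contC _) cont_fst_gen.
    + move=> [s p] [/= /andP[s0 s1] _]; apply/andP; split.
        by rewrite subr_ge0.
      by rewrite lerBlDr lerDl.
    + apply: wcont_pre; [exact: cont_snd_gen| |exact: hw].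
      by move=> [s p] [].
  - move=> p cp; apply/funext => z; rewrite /hom /= !subr0 subrr mul0r add0r mul1r.
    by [].
  - move=> p cp; apply/funext => z; rewrite /hom /= subrr subr0 mul1r mul0r addr0.
    by [].
  - move=> s p s01 bp; apply/funext => z; rewrite /hom /= hb // FK //.
    by rewrite -mulrDl subrK mul1r.
move=> g0 g1 [g0w g0b] [g1w g1b] [G [Gw G0 G1 Gb]]; exists (phi X Y v \o G); split.
- exact: wcont_post FL PO Gw.
- move=> p cp /=; rewrite G0 //= FK //; exact: (proj1 g0w).
- move=> p cp /=; rewrite G1 //= FK //; exact: (proj1 g1w).
- by move=> s p s01 bp /=; rewrite Gb // FK.
Qed.
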